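(* Let $k\ge1$, let $(x_{i+1/2})_{i\in\mathbb{Z}}$ be an arbitrary mesh and $(\bar v_i)_{i\in\mathbb{Z}}$ an arbitrary real sequence, and let $s_i$ and $v^\pm_{i+1/2}$ be the ENO stencil indices and cell interface values of the $k$th order ENO reconstruction. Then $s_i\le s_{i+1}$ for all $i$, and $$v^+_{i+1/2}-v^-_{i+1/2}=\sum_{s=s_i}^{s_{i+1}-1}[\bar v_s,\dots,\bar v_{s+k}]\,X_{i,s},\qquad X_{i,s}=(x_{s+k+1/2}-x_{s-1/2})\prod_{\substack{m=0\\ m\neq i-s}}^{k-1}(x_{i+1/2}-x_{s+m+1/2}),$$ where the sum is empty (equal to $0$) when $s_i=s_{i+1}$.
   Context: Mesh: a strictly increasing sequence $(x_{i+1/2})_{i\in\mathbb{Z}}$ of reals with $x_{i+1/2}\to\pm\infty$ as $i\to\pm\infty$; cells $I_i=[x_{i-1/2},x_{i+1/2})$ with lengths $\Delta x_i=x_{i+1/2}-x_{i-1/2}$. Given a real sequence $(\bar v_i)_{i\in\mathbb{Z}}$, the divided differences are defined by $[\bar v_i]=\bar v_i$ and, for $i<j$, $[\bar v_i,\dots,\bar v_j]=\frac{[\bar v_{i+1},\dots,\bar v_j]-[\bar v_i,\dots,\bar v_{j-1}]}{x_{j+1/2}-x_{i-1/2}}$. The $k$th order ENO reconstruction: for each $i$, set $s_i^1=i$, and for $\ell=1,\dots,k-1$ set $s_i^{\ell+1}=s_i^\ell-1$ if $\bigl|[\bar v_{s_i^\ell-1},\dots,\bar v_{s_i^\ell+\ell-1}]\bigr|<\bigl|[\bar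 v_{s_i^\ell},\dots,\bar v_{s_i^\ell+\ell}]\bigr|$, and $s_i^{\ell+1}=s_i^\ell$ otherwise; put $s_i=s_i^k\in\{i-k+1,\dots,i\}$. Then $p_i$ is the unique polynomial of degree at most $k-1$ with $\frac{1}{\Delta x_j}\int_{I_j}p_i(x)\,dx=\bar v_j$ for $j=s_i,\dots,s_i+k-1$. The cell interface values are $v^-_{i+1/2}=p_i(x_{i+1/2})$ and $v^+_{i+1/2}=p_{i+1}(x_{i+1/2})$. *)

(* Defs.v *)
(* The mesh and data take values in an arbitrary real field R
   (the paper's setting is R = the reals; the statement is purely algebraic). *)
From HB Require Import structures.
From mathcomp Require Import all_boot all_order all_algebra.
Set Implicit Arguments. Unset Strict Implicit. Unset Printing Implicit Defensive.
Import Order.TTheory GRing.Theory Num.Theory.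
Local Open Scope ring_scope.

Section ENO.
Variable R : realFieldType.

(* Mesh: x i stands for x_{i+1/2}; cell I_i = [x (i-1), x i). *)
Definition strictly_increasing_mesh (x : int -> R) : Prop :=
  forall i : int, x i < x (i + 1).

Definition mesh_unbounded (x : int -> R) : Prop :=
  (forall M : R, exists N : int, forall i : int, N <= i -> M < x i) /\
  (forall M : R, exists N : int, forall i : int, i <= N -> x i < M).

(* dd x v i n = [v_i, ..., v_{i+n}] *)
Fixpoint dd (x : int -> R) (v : int -> R) (i : int) (n : nat) : R :=
  match n with
  | 0%N => v i
  | n'.+1 => (dd x v (i + 1) n' - dd x v i n') / (x (i + n'.+1%:Z) - x (i - 1))
  end.

(* eno_st x v i n = s_i^{n+1} *)
Fixpoint eno_st (x v : int -> R) (i : int) (n : nat) : int :=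
  match n with
  | 0%N => i
  | n'.+1 => let s := eno_st x v i n' in
             if `|dd x v (s - 1) n'.+1| < `|dd x v s n'.+1| then s - 1 else s
  end.

Definition eno_stencil (k : nat) (x v : int -> R) (i : int) : int :=
  eno_st x v i k.-1.

Definition poly_prim (p : {poly R}) : {poly R} :=
  \poly_(j < (size p).+1) (if j is j'.+1 then p`_j' / j'.+1%:R else 0).

Definition cell_avg (x : int -> R) (p : {poly R}) (j : int) : R :=
  ((poly_prim p).[x j] - (poly_prim p).[x (j - 1)]) / (x j - x (j - 1)).

Definition is_eno_poly (k : nat) (x v : int -> R) (i : int) (p : {poly R}) : Prop :=
  (size p <= k)%N /\
  forall j : int, eno_stencil k x v i <= j <= eno_stencil k x v i + k%:Z - 1 ->
    cell_avg x p j = v j.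

Definition Xcoef (k : nat) (x : int -> R) (i s : int) : R :=
  (x (s + k%:Z) - x (s - 1)) *
  \prod_(m < k | m%:Z != i - s) (x i - x (s + m%:Z)).

End ENO.

(* Main.v *)
Require Import Defs.
From HB Require Import structures.
From mathcomp Require Import all_boot all_order all_algebra.
From mathcomp Require Import zify ring lra.
Set Implicit Arguments. Unset Strict Implicit. Unset Printing Implicit Defensive.
Import Order.TTheory GRing.Theory Num.Theory.
Local Open Scope ring_scope.

Section Interp.
Variable R : realFieldType.
Variables (x V : int -> R).
Hypothesis hx : strictly_increasing_mesh x.

Lemma x_ltS (a : int) (n : nat) : x a < x (a + n.+1%:Z).
Proof.
elim: n => [|n IH]; first exact: hx.
apply: (lt_trans IH); have -> : a + (n.+2)%:Z = (a + n.+1%:Z) + 1 by lia.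
exact: hx.
Qed.

Lemma x_lt (a b : int) : a < b -> x a < x b.
Proof.
move=> ab; have -> : b = a + (Posz (absz (b - a - 1)%R).+1) by lia.
exact: x_ltS.
Qed.

Lemma x_inj : injective x.
Proof.
move=> a b e; case: (ltgtP a b) => // h.
  by have := x_lt h; rewrite e ltxx.
by have := x_lt h; rewrite e ltxx.
Qed.

Fixpoint Ip (a : int) (n : nat) : {poly R} :=
  match n with
  | 0%N => (V a)%:P
  | n'.+1 => (x (a + n'.+1%:Z) - x a)^-1 *:
      (('X - (x a)%:P) * Ip (a + 1) n' - ('X - (x (a + n'.+1%:Z))%:P) * Ip a n')
  end.

Lemma size_Ip n a : (size (Ip a n) <= n.+1)%N.
Proof.
elim: n a => [|n IH] a /=; first exact: size_polyC_leq1.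
apply: leq_trans (size_scale_leq _ _) _.
apply: leq_trans (size_polyD _ _) _; rewrite size_polyN geq_max.
apply/andP; split; apply: leq_trans (size_polyMleq _ _) _;
  rewrite size_XsubC /=; exact: IH.
Qed.

Lemma Ip_interp n a j : (j <= n)%N -> (Ip a n).[x (a + j%:Z)] = V (a + j%:Z).
Proof.
elim: n a j => [|n IH] a j /=.
  by rewrite leqn0 => /eqP ->; rewrite hornerC addr0.
move=> jn.
have d0 : x (a + n.+1%:Z) - x a != 0.
  by rewrite subr_eq0 gt_eqF // x_ltS.
rewrite hornerZ hornerD hornerN !hornerM !hornerXsubC.
case: j jn => [|j] jn.
  have := IH a 0%N (leq0n n); rewrite !addr0 => ->.
  rewrite subrr mul0r add0r.
  have -> : - ((x a - x (a + n.+1%:Z)) * V a) = (x (a + n.+1%:Z) - x a) * V a by ring.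
  by rewrite mulrA mulVf // mul1r.
have h1 : (Ip (a + 1) n).[x (a + j.+1%:Z)] = V (a + j.+1%:Z).
  have -> : a + j.+1%:Z = (a + 1) + j%:Z by lia.
  by apply: IH.
rewrite h1.
case: (ltngtP j n) => jn'.
- rewrite IH //.
  rewrite -mulrBl.
  have -> : x (a + j.+1%:Z) - x a - (x (a + j.+1%:Z) - x (a + n.+1%:Z)) =
            x (a + n.+1%:Z) - x a by ring.
  by rewrite mulrA mulVf // mul1r.
- by move: jn; rewrite ltnS leqNgt jn'.
- by rewrite jn' subrr mul0r subr0 mulrA mulVf // mul1r.
Qed.

Definition cc a n := (Ip a n)`_n.

Lemma coef_XsubC_M (c : R) (p : {poly R}) n :
  (size p <= n.+1)%N -> (('X - c%:P) * p)`_n.+1 = p`_n.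
Proof.
move=> sp; rewrite mulrBl coefB coefXM coefCM /=.
by rewrite (nth_default _ sp) mulr0 subr0.
Qed.

Lemma cc_rec a n :
  cc a n.+1 = (cc (a + 1) n - cc a n) / (x (a + n.+1%:Z) - x a).
Proof.
rewrite /cc /= coefZ coefB !coef_XsubC_M ?size_Ip // mulrC.
by []. Qed.


Lemma poly_zero_roots (q : {poly R}) (rs : seq R) :
  (size q <= size rs)%N -> all (root q) rs -> uniq rs -> q = 0.
Proof.
move=> sq rq urs; apply/eqP; apply/negPn/negP => q0.
by have := max_poly_roots q0 rq urs; rewrite ltnNge sq.
Qed.

Lemma uniq_nodes (a : int) n : uniq [seq x (a + t%:Z) | t <- iota 0 n].
Proof.
rewrite map_inj_uniq ?iota_uniq // => t1 t2 /x_inj; lia.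
Qed.

Lemma big_iota_ord (F : nat -> {poly R}) n :
  \prod_(t <- iota 0 n) F t = \prod_(t < n) F t.
Proof. by rewrite -(big_mkord xpredT) /index_iota subn0. Qed.

Lemma Ip_diff a n :
  Ip (a + 1) n - Ip a n =
  (cc (a + 1) n - cc a n) *: \prod_(t < n) ('X - (x (a + 1 + t%:Z))%:P).
Proof.
set q := Ip (a + 1) n - Ip a n.
set rs := [seq x (a + 1 + t%:Z) | t <- iota 0 n].
have srs : size rs = n by rewrite size_map size_iota.
have rq : all (root q) rs.
  apply/allP => z /mapP [t]; rewrite mem_iota add0n => /andP [_ tn] ->.
  rewrite /root /q hornerD hornerN Ip_interp ?(ltnW tn) //.
  have -> : a + 1 + t%:Z = a + t.+1%:Z by lia.
  by rewrite Ip_interp // subrr.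
have urs : uniq rs by apply: uniq_nodes.
have sq : (size q <= n.+1)%N.
  apply: leq_trans (size_polyD _ _) _; rewrite size_polyN geq_max !size_Ip.
  done.
have cq : q`_n = cc (a + 1) n - cc a n by rewrite coefB.
case: (ltngtP (size q) n.+1) => hs.
- have q0 : q = 0 by apply: (poly_zero_roots _ rq urs); rewrite srs -ltnS.
  move: cq; rewrite q0 coef0 => <-; by rewrite scale0r.
- by move: sq; rewrite leqNgt hs.
- rewrite {1}(all_roots_prod_XsubC _ rq) ?srs ?uniq_rootsE //.
  rewrite /lead_coef hs /= cq big_map big_iota_ord //.
Qed.

Lemma deriv_prod_at n (f : 'I_n -> R) (m0 : 'I_n) :
  (\prod_(t < n) ('X - (f t)%:P))^`().[f m0] = \prod_(t < n | t != m0) (f m0 - f t).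
Proof.
rewrite (bigD1 m0) //= derivM derivXsubC mul1r hornerD hornerM hornerXsubC.
rewrite subrr mul0r addr0 horner_prod; apply: eq_bigr => t _.
by rewrite hornerXsubC.
Qed.

Lemma deriv_prim (p : {poly R}) : (poly_prim p)^`() = p.
Proof.
apply/polyP => j; rewrite coef_deriv coef_poly ltnS.
case: ltnP => hj.
  have nz : (j.+1%:R : R) != 0 by rewrite pnatr_eq0.
  by rewrite -mulrnAr -mulr_natl mulfV // mulr1.
by rewrite (nth_default _ hj) -mulr_natr mul0r.
Qed.

Lemma size_prim (p : {poly R}) : (size (poly_prim p) <= (size p).+1)%N.
Proof. exact: size_poly. Qed.

End Interp.

Section Eno.
Variable R : realFieldType.
Variables (x v V : int -> R).
Hypothesis hx : strictly_increasing_mesh x.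
Hypothesis hV : forall j, V j - V (j - 1) = v j * (x j - x (j - 1)).

Lemma dx_neq0 j : x j - x (j - 1) != 0.
Proof.
by rewrite subr_eq0 gt_eqF //; apply: x_lt => //; lia.
Qed.

Lemma dd_cc n i : dd x v i n = cc x V (i - 1) n.+1.
Proof.
elim: n i => [|n IH] i.
  rewrite cc_rec /cc /= !coefC /= subrK hV mulfK //; exact: dx_neq0.
rewrite cc_rec /= IH IH addrK subrK.
by have -> : i - 1 + n.+2%:Z = i + n.+1%:Z by lia.
Qed.

Lemma p_eq k (p : {poly R}) (s : int) :
  (size p <= k)%N ->
  (forall j, s <= j <= s + k%:Z - 1 -> cell_avg x p j = v j) ->
  p = (Ip x V (s - 1) k)^`().
Proof.
move=> sp hc.
set P := poly_prim p.
set Q := P - (P.[x (s - 1)] - V (s - 1))%:P.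
have hQ : forall j, (j <= k)%N -> Q.[x (s - 1 + j%:Z)] = V (s - 1 + j%:Z).
  elim => [|j IH] hj.
    rewrite addr0 /Q hornerD hornerN hornerC; ring.
  have IH' := IH (ltnW hj).
  have hcj := hc (s - 1 + j.+1%:Z) ltac:(lia).
  have e : s - 1 + j.+1%:Z - 1 = s - 1 + j%:Z by lia.
  have hVj := hV (s - 1 + j.+1%:Z).
  have dz := dx_neq0 (s - 1 + j.+1%:Z).
  rewrite /cell_avg -/P e in hcj; rewrite e in hVj dz.
  have key : P.[x (s - 1 + j.+1%:Z)] - P.[x (s - 1 + j%:Z)] =
             V (s - 1 + j.+1%:Z) - V (s - 1 + j%:Z).
    by rewrite hVj -hcj mulfVK.
  move: IH'; rewrite /Q !hornerD !hornerN !hornerC => IH'.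
  lra.
have QI : Q = Ip x V (s - 1) k.
  apply/eqP; rewrite -subr_eq0; apply/eqP.
  apply: (poly_zero_roots (rs := [seq x (s - 1 + t%:Z) | t <- iota 0 k.+1])).
  - rewrite size_map size_iota.
    apply: leq_trans (size_polyD _ _) _; rewrite size_polyN geq_max size_Ip andbT.
    apply: leq_trans (size_polyD _ _) _; rewrite size_polyN geq_max.
    rewrite (leq_trans (size_prim p)) ?ltnS //=.
    by apply: leq_trans (size_polyC_leq1 _) _.
  - apply/allP => z /mapP [t]; rewrite mem_iota add0n ltnS => /andP [_ tk] ->.
    by rewrite /root hornerD hornerN hQ // Ip_interp // subrr.
  - exact: uniq_nodes.
by rewrite -QI /Q derivB derivC subr0 deriv_prim.
Qed.

Lemma st_bounds i n : i - n%:Z <= eno_st x v i n <= i.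
Proof.
elim: n => [|n IH] /=; first by lia.
case: ifP => _; lia.
Qed.

Lemma st_mono i n : eno_st x v i n <= eno_st x v (i + 1) n.
Proof.
elim: n => [|n IH] /=; first by lia.
have := st_bounds i n; have := st_bounds (i + 1) n.
case: (eqVneq (eno_st x v i n) (eno_st x v (i + 1) n)) => [->|ne].
  by case: ifP => _; lia.
by case: ifP => _; case: ifP => _; lia.
Qed.

End Eno.

Section Main.
Variable R : realFieldType.

Definition Vof (w : int -> R) (j : int) : R :=
  match j with
  | Posz n => \sum_(t < n) w (t.+1%:Z)
  | Negz n => - \sum_(t < n.+1) w (- t%:Z)
  end.

Lemma Vof_diff w j : Vof w j - Vof w (j - 1) = w j.
Proof.
case: j => [[|n]|n].
- have -> : (Posz 0 - 1) = Negz 0 by [].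
  by rewrite /= big_ord0 big_ord1 oppr0 sub0r opprK.
- have -> : (Posz n.+1 - 1) = Posz n by lia.
  by rewrite /= big_ord_recr /= addrAC subrr add0r.
- have -> : (Negz n - 1) = Negz n.+1 by rewrite !NegzE; lia.
  rewrite /= opprK (big_ord_recr n.+1) /= addKr NegzE.
  by [].
Qed.

Lemma deriv_sum_nat (F : nat -> {poly R}) N :
  (\sum_(0 <= t < N) F t)^`() = \sum_(0 <= t < N) (F t)^`().
Proof.
elim: N => [|N IH]; first by rewrite !big_geq // deriv0.
by rewrite !big_nat_recr //= derivD IH.
Qed.

End Main.

Theorem mainTheorem2 (R : realFieldType) (k : nat) (x v : int -> R)
    (p : int -> {poly R}) :
  (1 <= k)%N ->
  strictly_increasing_mesh x ->
  mesh_unbounded x ->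
  (forall i : int, is_eno_poly k x v i (p i)) ->
  forall i : int,
    eno_stencil k x v i <= eno_stencil k x v (i + 1) /\
    (p (i + 1)).[x i] - (p i).[x i] =
      \sum_(0 <= t < absz (eno_stencil k x v (i + 1) - eno_stencil k x v i))
        dd x v (eno_stencil k x v i + t%:Z) k *
        Xcoef k x i (eno_stencil k x v i + t%:Z).
Proof.
move=> k1 hx _ hp i.
set V := Vof (fun j => v j * (x j - x (j - 1))).
have hV : forall j, V j - V (j - 1) = v j * (x j - x (j - 1)).
  by move=> j; rewrite /V Vof_diff.
have mono : eno_stencil k x v i <= eno_stencil k x v (i + 1) by apply: st_mono.
split => //.
have pe : forall j, p j = (Ip x V (eno_stencil k x v j - 1) k)^`().
  move=> j; case: (hp j) => sp hc; exact: (p_eq hx hV sp hc).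
rewrite !pe.
have b1 := st_bounds x v i k.-1.
have b2 := st_bounds x v (i + 1) k.-1.
rewrite /eno_stencil in mono pe b1 b2 *.
set s := eno_st x v i k.-1 in mono pe b1 b2 *.
set s' := eno_st x v (i + 1) k.-1 in mono pe b1 b2 *.
clearbody s s'.
set N := absz (s' - s).
have hkk : k.-1%:Z = k%:Z - 1 by lia.
have -> : forall (A B : {poly R}) y, A.[y] - B.[y] = (A - B).[y].
  by move=> A B y; rewrite hornerD hornerN.
rewrite -derivB.
have tel : Ip x V (s' - 1) k - Ip x V (s - 1) k =
   \sum_(0 <= t < N) (Ip x V (s - 1 + t.+1%:Z) k - Ip x V (s - 1 + t%:Z) k).
  rewrite (telescope_sumr (fun t => Ip x V (s - 1 + t%:Z) k)) // addr0.
  by have -> : s - 1 + N%:Z = s' - 1 by rewrite /N; lia.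
rewrite tel deriv_sum_nat horner_sum.
apply: eq_big_nat => t /andP [_ tN].
set a := s - 1 + t%:Z.
have -> : s - 1 + t.+1%:Z = a + 1 by rewrite /a; lia.
rewrite Ip_diff // derivZ hornerZ.
have ek : cc x V (a + 1) k - cc x V a k = cc x V a k.+1 * (x (a + k.+1%:Z) - x a).
  rewrite cc_rec mulfVK // subr_eq0 gt_eqF //; exact: x_ltS.
have hdd : dd x v (s + t%:Z) k = cc x V a k.+1.
  by rewrite (dd_cc hx hV) /a; congr cc; lia.
rewrite ek hdd /Xcoef -mulrA; congr (_ * _).
have -> : x (s + t%:Z + k%:Z) = x (a + k.+1%:Z) by congr x; rewrite /a; lia.
have -> : x (s + t%:Z - 1) = x a by congr x; rewrite /a; lia.
congr (_ * _).
have hm : (absz (i - (s + t%:Z))%R < k)%N by rewrite /N in tN; lia.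
pose f := fun m : 'I_k => x (s + t%:Z + m%:Z).
rewrite (eq_bigr (fun m : 'I_k => 'X - (f m)%:P)); last first.
  by move=> m _; rewrite /f /a; congr ('X - (x _)%:P); lia.
have -> : x i = f (Ordinal hm).
  have hi : s + t%:Z + (absz (i - (s + t%:Z))%R)%:Z = i by rewrite /N in tN; lia.
  by rewrite /f /= hi.
rewrite (deriv_prod_at f (Ordinal hm)); apply: eq_bigl => m /=.
rewrite /N in tN.
apply/idP/idP => /eqP ne; apply/eqP => eq; apply: ne.
  apply: val_inj => /=; lia.
move: eq => /(congr1 val) /= ->; lia.
Qed.
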